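(* Let $p,q$ be positive integers with $p>2q$, and let $F$ be a triangle-free graph. Then the following are equivalent: (1) every clique blowup $G$ of $F$ satisfies $\chi(G)\leq\lceil\frac{p}{2q}\omega(G)\rceil$; (2) every clique blowup $G'$ of $F$ with $\omega(G')\leq\max\{\frac{2q(p-q-2)}{p-2q},\,2q\}$ satisfies $\chi(G')\leq\lceil\frac{p}{2q}\omega(G')\rceil$.
   Context: All graphs are finite and simple. $\chi(G)$ denotes the chromatic number and $\omega(G)$ the clique number (maximum size of a set of pairwise adjacent vertices) of $G$. Substituting a vertex $v$ of a graph $H$ by a graph $K$ produces the graph with vertex set $V(K)\cup V(H-v)$ and edge set $E(K)\cup E(H-v)\cup\{xy : x\in V(K),\ y\in N_H(v)\}$. A clique blowup of a graph $H$ is a graph obtained from $H$ by substituting every vertex of $H$ by a clique (a complete graph), where these cliques are allowed to be empty. *)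

(* Defs.v *)
From mathcomp Require Import all_boot all_order all_algebra.
Set Implicit Arguments. Unset Strict Implicit. Unset Printing Implicit Defensive.
Import Order.TTheory GRing.Theory Num.Theory.

Definition simple_graph (T : finType) (e : rel T) : Prop :=
  symmetric e /\ irreflexive e.

Definition triangle_free (T : finType) (e : rel T) : Prop :=
  forall x y z : T, ~ [&& e x y, e y z & e x z].

Definition colorableb (V : finType) (r : rel V) (k : nat) : bool :=
  [exists f : {ffun V -> 'I_k}, [forall x, forall y, r x y ==> (f x != f y)]].

(* Chromatic number: least k such that a proper k-colouring exists
   (for loopless graphs some k <= #|V| always works). *)
Definition chi (V : finType) (r : rel V) : nat :=
  \big[minn/#|V|]_(k < #|V|.+1 | colorableb r k) k.

Definition cliqueb (V : finType) (r : rel V) (S : {set V}) : bool :=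
  [forall x in S, forall y in S, (x != y) ==> r x y].

Definition omega (V : finType) (r : rel V) : nat :=
  \max_(S : {set V} | cliqueb r S) #|S|.

(* Clique blowup of (T, e) with clique sizes n : T -> nat (possibly 0):
   every vertex v is substituted by a clique on 'I_(n v); two distinct
   vertices (u,i), (v,j) are adjacent iff u = v or u v is an edge of F. *)
Definition blowup_vertex (T : finType) (n : T -> nat) : finType :=
  {v : T & 'I_(n v)}.

Definition blowup_rel (T : finType) (e : rel T) (n : T -> nat)
  : rel (blowup_vertex n) :=
  fun x y => (x != y) && ((tag x == tag y) || e (tag x) (tag y)).
Arguments blowup_rel {T} e n.

Definition ratio_bound (p q w : nat) : int :=
  Num.ceil (((p%:R / (2 * q)%N%:R) * w%:R)%R : rat).

(* Main.v *)
Require Import Defs.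
From mathcomp Require Import all_boot all_order all_algebra.
From mathcomp.zify Require Import zify.
Import Order.TTheory GRing.Theory Num.Theory.
Set Implicit Arguments. Unset Strict Implicit. Unset Printing Implicit Defensive.

Definition dec_b (b : bool) : {b} + {~~ b} :=
  if b as c return {c} + {~~ c} then left isT else right isT.

Section Blow.
Variables (T : finType) (e : rel T).

Definition bv (n : T -> nat) (x : blowup_vertex n) : T * nat :=
  (tag x, nat_of_ord (tagged x)).

Lemma bv_inj (n : T -> nat) : injective (@bv n).
Proof.
case=> [v i] [w j]; rewrite /bv /= => -[Evw]; subst w => /val_inj -> //.
Qed.

Lemma rel_bv (n : T -> nat) (x y : blowup_vertex n) : blowup_rel e n x y =
  (bv x != bv y) && (((bv x).1 == (bv y).1) || e (bv x).1 (bv y).1).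
Proof. by rewrite /blowup_rel (inj_eq (@bv_inj n)). Qed.

Lemma fiber_card (n : T -> nat) (u : T) : #|[set x : blowup_vertex n | tag x == u]| = n u.
Proof.
have -> : [set x : blowup_vertex n | tag x == u] =
  [set (Tagged (fun v => 'I_(n v)) i) | i : 'I_(n u)].
  apply/setP => -[w j]; rewrite !inE /=; apply/idP/imsetP.
    by move=> /eqP Ew; subst w; exists j.
  by case=> i _ E; have := congr1 (fun x => tag x) E => /= ->.
rewrite card_imset ?card_ord // => i j /(congr1 (@bv n)) [] /val_inj.
done.
Qed.

Lemma chi_le (V : finType) (r : rel V) (k : nat) : colorableb r k -> (chi r <= k)%N.
Proof.
move=> ck; rewrite /chi.
have hle : (\big[minn/#|V|]_(k < #|V|.+1 | colorableb r k) k <= #|V|)%N.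
  apply: (big_ind (fun x => x <= #|V|)%N) => //.
    by move=> x y hx hy; rewrite geq_min hx.
  by move=> i _; rewrite -ltnS.
case: (ltnP k #|V|.+1) => hk; last by apply: leq_trans hle (ltnW hk).
rewrite -minEnat.
have h := @bigmin_le_cond _ _ _ #|V| (Ordinal hk) (fun k : 'I_#|V|.+1 => colorableb r k) (fun k => nat_of_ord k) ck.
exact: h.
Qed.

Lemma chi_col (V : finType) (r : rel V) : irreflexive r -> colorableb r (chi r).
Proof.
move=> irr; rewrite /chi; apply: (big_ind (colorableb r)) => //.
- apply/existsP; exists [ffun x => enum_rank x]; apply/forallP => x; apply/forallP => y.
  apply/implyP => rxy; rewrite !ffunE (inj_eq enum_rank_inj).
  by apply: contraTneq rxy => ->; rewrite irr.
- by move=> x y hx hy; rewrite /minn; case: ifP.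
Qed.


Lemma chi_split (n a b : T -> nat) : (forall v, n v = a v + b v) ->
  (chi (blowup_rel e n) <= chi (blowup_rel e a) + chi (blowup_rel e b))%N.
Proof.
move=> hn.
have irr (m : T -> nat) : irreflexive (blowup_rel e m) by move=> x; rewrite /blowup_rel eqxx.
suff : colorableb (blowup_rel e n) (chi (blowup_rel e a) + chi (blowup_rel e b)) by apply: chi_le.
move: (chi_col (irr a)) (chi_col (irr b)).
move: (chi (blowup_rel e a)) (chi (blowup_rel e b)) => k1 k2.
move=> /existsP [f1 /forallP H1] /existsP [f2 /forallP H2].
have hb : forall x : blowup_vertex n, ~~ (val (tagged x) < a (tag x))%N -> (val (tagged x) - a (tag x) < b (tag x))%N.
  move=> [v [i Hi]] /= H; have := hn v; lia.
pose g (x : blowup_vertex n) : blowup_vertex a + blowup_vertex b :=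
  match dec_b (val (tagged x) < a (tag x))%N with
  | left H => inl (Tagged (fun v => 'I_(a v)) (Ordinal H))
  | right H => inr (Tagged (fun v => 'I_(b v)) (Ordinal (hb x H))) end.
have gP : forall x, (exists2 y, g x = inl y & bv y = bv x) \/
   (exists2 z, g x = inr z & bv z = ((bv x).1, (bv x).2 - a (bv x).1) /\ (a (bv x).1 <= (bv x).2)%N).
  move=> x; rewrite /g; case: dec_b => H.
    by left; exists (Tagged (fun v => 'I_(a v)) (Ordinal H)).
  right; exists (Tagged (fun v => 'I_(b v)) (Ordinal (hb x H))) => //; split => //; rewrite /bv /=; rewrite leqNgt; exact: H.
apply/existsP.
exists [ffun x => match g x with inl y => lshift k2 (f1 y) | inr z => rshift k1 (f2 z) end].
apply/forallP => x; apply/forallP => y; apply/implyP => rxy; rewrite !ffunE.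
rewrite rel_bv in rxy.
case: (gP x) => [[y1 -> E1]|[z1 -> [E1 L1]]]; case: (gP y) => [[y2 -> E2]|[z2 -> [E2 L2]]].
- rewrite (inj_eq (@lshift_inj _ _)); have := H1 y1; move/forallP/(_ y2)/implyP; apply.
  by rewrite rel_bv E1 E2.
- by rewrite eq_lrshift.
- by rewrite eq_rlshift.
- rewrite (inj_eq (@rshift_inj _ _)); have := H2 z1; move/forallP/(_ z2)/implyP; apply.
  rewrite rel_bv E1 E2; move: rxy L1 L2; case: (bv x) => v i; case: (bv y) => w j /=.
  case/andP => ne -> L1 L2; rewrite andbT; apply: contra ne => /eqP [Evw Eij].
  by subst w; apply/eqP; congr pair; lia.
Qed.

Lemma cliqueP (V : finType) (r : rel V) (S : {set V}) :
  cliqueb r S -> forall x y, x \in S -> y \in S -> x != y -> r x y.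
Proof.
move=> cS x y xS yS; move/forall_inP: cS => /(_ x xS) /forall_inP /(_ y yS).
by move/implyP.
Qed.

Lemma omega_ge_v (n : T -> nat) v : (n v <= omega (blowup_rel e n))%N.
Proof.
rewrite -fiber_card; apply: leq_bigmax_cond.
apply/forall_inP => x; rewrite inE => /eqP xv; apply/forall_inP => y; rewrite inE => /eqP yv.
by apply/implyP => ne; rewrite /blowup_rel ne xv yv eqxx.
Qed.

Lemma omega_ge_e (n : T -> nat) u v : symmetric e -> e u v -> u != v ->
  (n u + n v <= omega (blowup_rel e n))%N.
Proof.
move=> sym euv nuv.
have dis : [set x : blowup_vertex n | tag x == u] :&: [set x | tag x == v] = set0.
  apply/setP => x; rewrite !inE; apply/negbTE/negP => /andP [/eqP -> /eqP E].
  by rewrite E eqxx in nuv.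
have <- : #|[set x : blowup_vertex n | tag x == u] :|: [set x | tag x == v]| = n u + n v.
  by rewrite cardsU dis cards0 subn0 !fiber_card.
apply: leq_bigmax_cond.
apply/forall_inP => x; rewrite !inE => hx; apply/forall_inP => y; rewrite !inE => hy.
apply/implyP => ne; rewrite /blowup_rel ne /=.
case/orP: hx => /eqP ->; case/orP: hy => /eqP ->; rewrite ?eqxx ?euv // ?orbT //.
by rewrite (sym v u) euv orbT.
Qed.

Lemma omega_le (n : T -> nat) W : triangle_free e ->
  (forall v, n v <= W)%N -> (forall u v, e u v -> n u + n v <= W)%N ->
  (omega (blowup_rel e n) <= W)%N.
Proof.
move=> tf hv he; apply/bigmax_leqP => S cS.
have cl := cliqueP cS.
have tl x y : x \in S -> y \in S -> tag x != tag y -> e (tag x) (tag y).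
  move=> xS yS ne; have : x != y by apply: contra ne => /eqP ->.
  by move=> /(cl x y xS yS); rewrite /blowup_rel (negbTE ne) /= => /andP [].
case: (set_0Vmem S) => [-> | [x0 x0S]]; first by rewrite cards0.
case: (boolP [forall y in S, tag y == tag x0]) => [/forall_inP allu | /forall_inPn [y yS ne]].
  apply: leq_trans (hv (tag x0)); rewrite -fiber_card; apply: subset_leq_card.
  by apply/subsetP => x xS; rewrite inE allu.
have euv : e (tag x0) (tag y) by apply: tl; rewrite // eq_sym.
have sub : S \subset [set x | tag x == tag x0] :|: [set x | tag x == tag y].
  apply/subsetP => z zS; rewrite !inE; apply/negPn/negP => /norP [nu nv].
  apply: (tf (tag x0) (tag y) (tag z)); rewrite euv.
  by rewrite (tl y z yS zS) ?(tl x0 z x0S zS) // eq_sym.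
apply: leq_trans (subset_leq_card sub) _.
apply: leq_trans (leq_card_setU _ _).1 _.
by rewrite !fiber_card he.
Qed.

End Blow.

Definition mmf (W q x : nat) : nat := if (W - q < x)%N then x + 2 * q - W else minn x q.

Lemma arith1 W q x : (2 * q < W)%N -> (x <= W)%N ->
  [/\ (mmf W q x <= x)%N, (x - mmf W q x <= W - 2 * q)%N & (mmf W q x <= 2 * q)%N].
Proof. by rewrite /mmf; case: (ltnP (W - q) x) => h1 h2 h3; split; lia. Qed.

Lemma arith2 W q x y : (2 * q < W)%N -> (x + y <= W)%N ->
  ((x - mmf W q x) + (y - mmf W q y) <= W - 2 * q)%N /\ (mmf W q x + mmf W q y <= 2 * q)%N.
Proof. by rewrite /mmf; case: (ltnP (W - q) x) => h1; case: (ltnP (W - q) y) => h2 h3 h4; split; lia. Qed.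

Section RB.
Local Open Scope ring_scope.

Lemma ceil_nat (p : nat) : Num.ceil (p%:R : rat) = p%:Z.
Proof. by rewrite -(intrKceil (R := rat) p%:Z) pmulrn. Qed.

Lemma rb_mono p q w1 w2 : (w1 <= w2)%N -> ratio_bound p q w1 <= ratio_bound p q w2.
Proof.
move=> h; rewrite /ratio_bound; apply: le_ceil; apply: ler_wpM2l.
  by rewrite divr_ge0 // ler0n.
by rewrite ler_nat.
Qed.

Lemma rb_add p q w : (0 < q)%N -> ratio_bound p q (w + 2 * q) = ratio_bound p q w + p%:Z.
Proof.
move=> q0; rewrite /ratio_bound natrD mulrDr.
have -> : (p%:R / (2 * q)%N%:R * (2 * q)%N%:R = p%:R :> rat).
  by rewrite divfK // pnatr_eq0 muln_eq0 negb_or /= -lt0n q0.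
by rewrite ceilDrz ?natr_int // ceil_nat.
Qed.

Lemma rb_2q p q : (0 < q)%N -> ratio_bound p q (2 * q) = p%:Z.
Proof. by move=> q0; have := rb_add p 0%N q0; rewrite add0n => ->; rewrite /ratio_bound mulr0 (_ : Num.ceil (0 : rat) = 0) ?add0r //; exact: ceil_nat 0%N. Qed.


End RB.

Theorem theorem1p1 (p q : nat) (T : finType) (e : rel T) :
  (0 < q)%N -> (2 * q < p)%N ->
  simple_graph e -> triangle_free e ->
  ((forall n : T -> nat,
      ((chi (blowup_rel e n))%:Z <= ratio_bound p q (omega (blowup_rel e n)))%R)
   <->
   (forall n : T -> nat,
      ((omega (blowup_rel e n))%:R <=
         Num.max ((2 * q)%N%:R * (p%:R - q%:R - 2) / (p%:R - (2 * q)%N%:R))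
                 (2 * q)%N%:R :> rat)%R ->
      ((chi (blowup_rel e n))%:Z <= ratio_bound p q (omega (blowup_rel e n)))%R)).
Proof.
move=> q0 qp [sym irr] tf; split; first by move=> H n _; apply: H.
move=> H2.
have small : forall n : T -> nat, (omega (blowup_rel e n) <= 2 * q)%N ->
    ((chi (blowup_rel e n))%:Z <= ratio_bound p q (omega (blowup_rel e n)))%R.
  move=> n hn; apply: H2; rewrite le_max; apply/orP; right; by rewrite ler_nat.
suff : forall W n, omega (blowup_rel e n) = W ->
    ((chi (blowup_rel e n))%:Z <= ratio_bound p q W)%R by move=> H n; apply: H.
elim/ltn_ind => W IH n hW.
case: (leqP W (2 * q)) => hsmall; first by rewrite -hW; apply: small; rewrite hW.
have hv v : (n v <= W)%N by rewrite -hW; apply: omega_ge_v.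
have he u v : e u v -> (n u + n v <= W)%N.
  move=> euv; rewrite -hW; apply: omega_ge_e => //.
  by apply/eqP => E; subst v; apply: (tf u u u); rewrite euv.
pose m v := mmf W q (n v).
pose a v := (n v - m v)%N.
have hsplit v : n v = (a v + m v)%N.
  by case: (arith1 hsmall (hv v)) => h1 _ _; rewrite /a subnK.
have oa : (omega (blowup_rel e a) <= W - 2 * q)%N.
  apply: omega_le => // [v | u v euv].
    by case: (arith1 hsmall (hv v)).
  by case: (arith2 hsmall (he u v euv)).
have om : (omega (blowup_rel e m) <= 2 * q)%N.
  apply: omega_le => // [v | u v euv].
    by case: (arith1 hsmall (hv v)).
  by case: (arith2 hsmall (he u v euv)).
have c1 := chi_split e hsplit.
have ca : ((chi (blowup_rel e a))%:Z <= ratio_bound p q (W - 2 * q))%R.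
  apply: le_trans (IH (omega (blowup_rel e a)) _ a erefl) (rb_mono _ _ oa).
  by apply: leq_ltn_trans oa _; lia.
have cm : ((chi (blowup_rel e m))%:Z <= p%:Z)%R.
  by rewrite -(rb_2q p q0); apply: le_trans (small m om) (rb_mono _ _ om).
have -> : W = ((W - 2 * q) + 2 * q)%N by lia.
rewrite rb_add //.
apply: (@le_trans _ _ (Posz (chi (blowup_rel e a) + chi (blowup_rel e m))%N)); first by rewrite lez_nat.
rewrite PoszD; exact: lerD ca cm.
Qed.
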